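(* Let $\mathcal X=\{X_1,\dots,X_n\}$, $n\in\mathbb N$, be a multi-set of real symmetric $2\times2$ matrices with $-\frac1{\sqrt2}I\le_{\mathrm L}X_i\le_{\mathrm L}\frac1{\sqrt2}I$ for all $i$. Then $-\frac1{\sqrt2}I\le_{\mathrm L}\mathrm{Sup}_{\mathrm{RLE}}(\mathcal X)\le_{\mathrm L}\frac1{\sqrt2}I$.
   Context: $A\le_{\mathrm L}B$ means $B-A$ is positive semidefinite; $I$ is the $2\times 2$ identity. $\mathrm{Sup}_{\mathrm{LE}}(\mathcal X):=\lim_{m\to\infty}\frac1m\log\sum_{i}\exp(mX_i)$. Write $X_i=\lambda_iu_iu_i^{\mathsf T}+\mu_iv_iv_i^{\mathsf T}$ (spectral form, $\lambda_i\ge\mu_i$, orthonormal $u_i,v_i$). The multi-set of bases $\{\{u_i,v_i\}\}_{i}$ is generic if for no $i\neq j$ the vector $u_i$ is aligned (equal up to sign) with $u_j$. Families $\mathcal X^{(\delta)}=\{X_1^{(\delta)},\dots,X_n^{(\delta)}\}$ converge planar to $\mathcal X$ if $X_i^{(\delta)}\to X_i$ as $\delta\to0$ and $X_i^{(\delta)}$ has the same eigenvalues as $X_i$ for all $i$ and $\delta$. The relaxed log-exp-supremum is $\mathrm{Sup}_{\mathrm{RLE}}(\mathcal X):=\mathrm{Sup}_{\mathrm{LE}}(\mathcal X)$ if the bases of $\mathcal X$ are generic, and otherwise $\mathrm{Sup}_{\mathrm{RLE}}(\mathcal X):=\lim_{\delta\to0}\mathrm{Sup}_{\mathrm{LE}}(\mathcal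 X^{(\delta)})$, where $\mathcal X^{(\delta)}$ converges planar to $\mathcal X$ and each $\mathcal X^{(\delta)}$ has generic bases (the limit being the same for all such families). *)

(* Defs.v *)
From HB Require Import structures.
From mathcomp Require Import all_boot all_order all_algebra.
From mathcomp Require Import all_classical all_reals all_analysis.
Set Implicit Arguments. Unset Strict Implicit. Unset Printing Implicit Defensive.
Import Order.TTheory GRing.Theory Num.Theory.
Import numFieldNormedType.Exports.
Local Open Scope classical_set_scope.
Local Open Scope ring_scope.

Section Defs.
Variable R : realType.

Definition symmetric2 (A : 'M[R]_2) : Prop := A^T = A.

Definition psd2 (A : 'M[R]_2) : Prop :=
  forall v : 'cV[R]_2, 0 <= ((v^T *m A *m v) 0 0).

Definition loewner_le (A B : 'M[R]_2) : Prop := psd2 (B - A).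

Definition mexp (A : 'M[R]_2) : 'M[R]_2 :=
  lim (series (fun k : nat => (k`!%:R)^-1 *: A ^+ k) @ \oo).

(* matrix logarithm: the real symmetric B with exp B = A
   (exists uniquely for A symmetric positive definite) *)
Definition mlog (A : 'M[R]_2) : 'M[R]_2 :=
  xget 0 [set B | symmetric2 B /\ mexp B = A].

Definition SupLE (n : nat) (X : 'I_n -> 'M[R]_2) : 'M[R]_2 :=
  lim ((fun m : nat => (m%:R)^-1 *: mlog (\sum_(i < n) mexp (m%:R *: X i)))
         @ \oo).

Definition spectral_form (X : 'M[R]_2) (lam mu : R) (u v : 'cV[R]_2) : Prop :=
  [/\ mu <= lam, (u^T *m u) 0 0 = 1, (v^T *m v) 0 0 = 1, (u^T *m v) 0 0 = 0
    & X = lam *: (u *m u^T) + mu *: (v *m v^T)].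

Definition aligned (u w : 'cV[R]_2) : Prop := u = w \/ u = - w.

Definition generic_bases (n : nat) (X : 'I_n -> 'M[R]_2) : Prop :=
  exists u : 'I_n -> 'cV[R]_2,
    (forall i, exists (lam mu : R) (v : 'cV[R]_2), spectral_form (X i) lam mu (u i) v)
    /\ (forall i j : 'I_n, i != j -> ~ aligned (u i) (u j)).

Definition converges_planar (n : nat) (Xd : R -> 'I_n -> 'M[R]_2)
    (X : 'I_n -> 'M[R]_2) : Prop :=
  (forall i, (fun d => Xd d i) @ 0^'+ --> X i) /\
  (forall d, 0 < d -> forall i (a : R), eigenvalue (Xd d i) a = eigenvalue (X i) a).

Definition admissible_families (n : nat) (X : 'I_n -> 'M[R]_2) :
    set (R -> 'I_n -> 'M[R]_2) :=
  [set Xd | converges_planar Xd X /\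
            (forall d, 0 < d -> (forall i, symmetric2 (Xd d i)) /\ generic_bases (Xd d))].

Definition SupRLE (n : nat) (X : 'I_n -> 'M[R]_2) : 'M[R]_2 :=
  if `[< generic_bases X >] then SupLE X
  else lim ((fun d => SupLE (xget (fun _ => X) (admissible_families X) d)) @ 0^'+).

End Defs.

(* Main.v *)
Require Import Defs.
From HB Require Import structures.
From mathcomp Require Import all_boot all_order all_algebra.
From mathcomp Require Import all_classical all_reals all_analysis.
From mathcomp Require Import ring lra.
Set Implicit Arguments. Unset Strict Implicit. Unset Printing Implicit Defensive.
Import Order.TTheory GRing.Theory Num.Theory.
Import numFieldNormedType.Exports.
Local Open Scope ring_scope.

Section Aux.
Variable R : realType.
Implicit Types (A B P Q Y S X : 'M[R]_2) (w : 'cV[R]_2).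

Lemma mx2_eq m (A B : 'M[R]_(2, m)) :
  (forall j, A 0 j = B 0 j) -> (forall j, A 1 j = B 1 j) -> A = B.
Proof.
move=> h0 h1; apply/matrixP => i j.
have [->|/negPf i1] := eqVneq i 0; first exact: h0.
have -> : i = 1; last exact: h1.
by apply/val_inj; move: i1; case: i => [[|[|//]]].
Qed.

Lemma mx2_eq' A B : A 0 0 = B 0 0 -> A 0 1 = B 0 1 -> A 1 0 = B 1 0 ->
  A 1 1 = B 1 1 -> A = B.
Proof.
move=> h00 h01 h10 h11; apply: mx2_eq => j.
  have [->|/negPf j1] := eqVneq j 0 => //.
  by have -> : j = 1 by apply/val_inj; move: j1; case: j => [[|[|//]]].
have [->|/negPf j1] := eqVneq j 0 => //.
by have -> : j = 1 by apply/val_inj; move: j1; case: j => [[|[|//]]].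
Qed.

Lemma cv2_eq (u v : 'cV[R]_2) : u 0 0 = v 0 0 -> u 1 0 = v 1 0 -> u = v.
Proof.
move=> h0 h1; apply: mx2_eq => j; by rewrite (ord1 j).
Qed.

Lemma mul2E m p (A : 'M[R]_(m, 2)) (B : 'M[R]_(2, p)) i j :
  (A *m B) i j = A i 0 * B 0 j + A i 1 * B 1 j.
Proof.
rewrite mxE big_ord_recl big_ord1.
by have -> : lift ord0 ord0 = 1 :> 'I_2 by apply/val_inj.
Qed.

Lemma mul1E m p (A : 'M[R]_(m, 1)) (B : 'M[R]_(1, p)) i j :
  (A *m B) i j = A i 0 * B 0 j.
Proof. by rewrite mxE big_ord1. Qed.

Lemma one2E (i j : 'I_2) : (1%:M : 'M[R]_2) i j = (i == j)%:R.
Proof. by rewrite mxE. Qed.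


Definition qf Y w : R := (w^T *m Y *m w) 0 0.
Definition nrm w : R := (w^T *m w) 0 0.

Lemma qfE Y w : qf Y w = w 0 0 * (Y 0 0 * w 0 0 + Y 0 1 * w 1 0)
  + w 1 0 * (Y 1 0 * w 0 0 + Y 1 1 * w 1 0).
Proof. rewrite /qf !mul2E !mxE; ring. Qed.

Lemma nrmE w : nrm w = w 0 0 ^+ 2 + w 1 0 ^+ 2.
Proof. rewrite /nrm !mul2E !mxE; ring. Qed.

Lemma nrm_qf w : nrm w = qf 1%:M w.
Proof. by rewrite nrmE qfE !one2E /=; ring. Qed.

Lemma nrm_ge0 w : 0 <= nrm w.
Proof. rewrite nrmE; nra. Qed.

Lemma nrm_gt0 w : w != 0 -> 0 < nrm w.
Proof.
move=> wn0; rewrite lt_neqAle nrm_ge0 andbT; apply/eqP => h.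
move/eqP: wn0; apply; apply: cv2_eq; rewrite !mxE.
  by move: h; rewrite nrmE; nra.
by move: h; rewrite nrmE; nra.
Qed.

Lemma qfD Y Z w : qf (Y + Z) w = qf Y w + qf Z w.
Proof. rewrite !qfE !mxE; ring. Qed.
Lemma qfN Y w : qf (- Y) w = - qf Y w.
Proof. rewrite !qfE !mxE; ring. Qed.
Lemma qfB Y Z w : qf (Y - Z) w = qf Y w - qf Z w.
Proof. by rewrite qfD qfN. Qed.
Lemma qfZ a Y w : qf (a *: Y) w = a * qf Y w.
Proof. rewrite !qfE !mxE; ring. Qed.
Lemma qf0 w : qf 0 w = 0.
Proof. rewrite !qfE !mxE; ring. Qed.
Lemma qf_sum n (F : 'I_n -> 'M[R]_2) w :
  qf (\sum_(i < n) F i) w = \sum_(i < n) qf (F i) w.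
Proof.
elim/big_rec2: _ => [|i x y _ <-]; first by rewrite qf0.
by rewrite qfD.
Qed.

Lemma loewnerP A B : loewner_le A B <-> forall w, qf A w <= qf B w.
Proof.
rewrite /loewner_le /psd2; split=> h w; have := h w.
  by rewrite -/(qf _ _) qfB subr_ge0.
by rewrite -/(qf _ _) qfB subr_ge0.
Qed.

Lemma qf_eig Y w a : Y *m w = a *: w -> qf Y w = a * nrm w.
Proof. by move=> h; rewrite /qf -mulmxA h -scalemxAr mxE. Qed.

Lemma qf_proj_ge0 P w : P^T = P -> P *m P = P -> 0 <= qf P w.
Proof.
move=> Pt PP.
have -> : qf P w = nrm (P *m w).
  by rewrite /nrm /qf trmx_mul Pt mulmxA -(mulmxA _ P P) PP.
exact: nrm_ge0.
Qed.


Record spec2 A (l m : R) P Q : Prop := Spec2 {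
  sA : A = l *: P + m *: Q;
  sPQ : P + Q = 1%:M;
  sPP : P *m P = P;
  sQQ : Q *m Q = Q;
  sPQ0 : P *m Q = 0;
  sQP0 : Q *m P = 0;
  sPt : P^T = P;
  sQt : Q^T = Q;
  sPw : exists2 w : 'cV[R]_2, w != 0 & P *m w = w;
  sQw : exists2 w : 'cV[R]_2, w != 0 & Q *m w = w }.
Arguments sA {A l m P Q}. Arguments sPQ {A l m P Q}. Arguments sPP {A l m P Q}.
Arguments sQQ {A l m P Q}. Arguments sPQ0 {A l m P Q}. Arguments sQP0 {A l m P Q}.
Arguments sPt {A l m P Q}. Arguments sQt {A l m P Q}. Arguments sPw {A l m P Q}.
Arguments sQw {A l m P Q}.

Lemma spec_qf A l m P Q w : spec2 A l m P Q ->
  [/\ qf A w = l * qf P w + m * qf Q w, qf P w + qf Q w = nrm w,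
      0 <= qf P w & 0 <= qf Q w].
Proof.
case=> -> hPQ PP QQ _ _ Pt Qt _ _; split.
- by rewrite qfD !qfZ.
- by rewrite -qfD hPQ nrm_qf.
- exact: qf_proj_ge0.
- exact: qf_proj_ge0.
Qed.

Lemma spec_le A l m P Q t w : spec2 A l m P Q -> l <= t -> m <= t ->
  qf A w <= t * nrm w.
Proof. move=> s; have [-> <- hp hq] := @spec_qf _ _ _ _ _ w s; move=> hl hm; nra. Qed.

Lemma spec_ge A l m P Q t w : spec2 A l m P Q -> t <= l -> t <= m ->
  t * nrm w <= qf A w.
Proof. move=> s; have [-> <- hp hq] := @spec_qf _ _ _ _ _ w s; move=> hl hm; nra. Qed.

Lemma spec_eigl A l m P Q : spec2 A l m P Q ->
  exists2 w : 'cV[R]_2, w != 0 & A *m w = l *: w.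
Proof.
move=> s; case: (sPw s) => w wn0 Pw; exists w => //.
rewrite (sA s) mulmxDl -!scalemxAl Pw.
by rewrite -Pw mulmxA (sQP0 s) mul0mx scaler0 addr0.
Qed.

Lemma spec_eigm A l m P Q : spec2 A l m P Q ->
  exists2 w : 'cV[R]_2, w != 0 & A *m w = m *: w.
Proof.
move=> s; case: (sQw s) => w wn0 Qw; exists w => //.
rewrite (sA s) mulmxDl -!scalemxAl Qw.
by rewrite -Qw mulmxA (sPQ0 s) mul0mx scaler0 add0r.
Qed.

Lemma eig_le A w a t : w != 0 -> A *m w = a *: w ->
  qf A w <= t * nrm w -> a <= t.
Proof.
move=> wn0 Aw; rewrite (qf_eig Aw) ler_pM2r //; exact: nrm_gt0.
Qed.

Lemma eig_ge A w a t : w != 0 -> A *m w = a *: w ->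
  t * nrm w <= qf A w -> t <= a.
Proof.
move=> wn0 Aw; rewrite (qf_eig Aw) ler_pM2r //; exact: nrm_gt0.
Qed.

Lemma spec_bounds A l m P Q lo hi : spec2 A l m P Q ->
  (forall w, lo * nrm w <= qf A w <= hi * nrm w) ->
  [/\ lo <= l, l <= hi, lo <= m & m <= hi].
Proof.
move=> s h.
case: (spec_eigl s) => w wn0 Aw; case: (spec_eigm s) => v vn0 Av.
have /andP[h1 h2] := h w; have /andP[h3 h4] := h v.
split; [exact: eig_ge h1|exact: eig_le h2|exact: eig_ge h3|exact: eig_le h4].
Qed.

Lemma spec_scale A l m P Q k : spec2 A l m P Q ->
  spec2 (k *: A) (k * l) (k * m) P Q.
Proof.
case=> hA *; split => //.
by rewrite hA scalerDr !scalerA.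
Qed.


Lemma spec_pow A l m P Q k : spec2 A l m P Q ->
  A ^+ k = l ^+ k *: P + m ^+ k *: Q.
Proof.
move=> s; elim: k => [|k IH].
  by rewrite !expr0 !scale1r (sPQ s).
rewrite exprS IH (sA s) -!mulmxE !mulmxDl !mulmxDr -!scalemxAl -!scalemxAr.
rewrite (sPP s) (sQQ s) (sPQ0 s) (sQP0 s) !scaler0 addr0 add0r !scalerA.
by rewrite -!exprS.
Qed.

Lemma spec_exp A l m P Q : spec2 A l m P Q ->
  mexp A = expR l *: P + expR m *: Q.
Proof.
move=> s; rewrite /mexp.
have -> : series (fun k : nat => (k`!%:R)^-1 *: A ^+ k) =
    (fun N => series (exp_coeff l) N *: P + series (exp_coeff m) N *: Q).
  apply/funext => N; rewrite /series /= !scaler_suml -big_split /=.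
  apply: eq_bigr => k _; rewrite (spec_pow k s) scalerDr !scalerA.
  by rewrite /exp_coeff /= ![_^-1 * _]mulrC.
apply: (@cvg_lim _ (@norm_hausdorff R 'M[R]_2)).
apply: cvgD; apply: cvgZl; exact: is_cvg_series_exp_coeff.
Qed.

Lemma spec_mexp A l m P Q : spec2 A l m P Q ->
  spec2 (mexp A) (expR l) (expR m) P Q.
Proof. by move=> s; case: (s) => *; split => //; exact: spec_exp. Qed.


Definition mk2 (x00 x01 x10 x11 : R) : 'M[R]_2 :=
  \matrix_(i, j) if i == 0 then (if j == 0 then x00 else x01)
                 else (if j == 0 then x10 else x11).

Lemma mk2E x00 x01 x10 x11 :
  [/\ mk2 x00 x01 x10 x11 0 0 = x00, mk2 x00 x01 x10 x11 0 1 = x01,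
      mk2 x00 x01 x10 x11 1 0 = x10 & mk2 x00 x01 x10 x11 1 1 = x11].
Proof. by rewrite !mxE. Qed.

Lemma one2E' : [/\ (1%:M : 'M[R]_2) 0 0 = 1, (1%:M : 'M[R]_2) 0 1 = 0,
   (1%:M : 'M[R]_2) 1 0 = 0 & (1%:M : 'M[R]_2) 1 1 = 1].
Proof. by rewrite !mxE. Qed.

Lemma idem_vec P : P *m P = P -> P 0 0 + P 1 1 = 1 ->
  exists2 w : 'cV[R]_2, w != 0 & P *m w = w.
Proof.
move=> PP tr.
have [h0|h0] := eqVneq (P 0 0) 0.
  exists (P *m delta_mx 1 0); last by rewrite mulmxA PP.
  apply/negP => /eqP/matrixP/(_ 1 0); rewrite mul2E !mxE /=.
  move: tr; rewrite h0 add0r => ->; rewrite mulr0 mulr1 add0r; apply/eqP.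
  exact: oner_neq0.
exists (P *m delta_mx 0 0); last by rewrite mulmxA PP.
apply/negP => /eqP/matrixP/(_ 0 0); rewrite mul2E !mxE /=.
by rewrite mulr1 mulr0 addr0; apply/eqP.
Qed.


Lemma mk2_eta A : A = mk2 (A 0 0) (A 0 1) (A 1 0) (A 1 1).
Proof. by apply: mx2_eq'; rewrite !mxE. Qed.

Lemma spec_exists A : symmetric2 A -> exists l m P Q, spec2 A l m P Q.
Proof.
move=> sym.
have hb : A 1 0 = A 0 1 by rewrite -[in LHS]sym mxE.
set a := A 0 0; set b := A 0 1; set d := A 1 1.
have eA : A = mk2 a b b d by rewrite {1}(mk2_eta A) hb.
set p := (a + d) / 2; set e := (a - d) / 2.
set r := Num.sqrt (e ^+ 2 + b ^+ 2).
have r2 : r ^+ 2 = e ^+ 2 + b ^+ 2 by rewrite sqr_sqrtr // addr_ge0 // sqr_ge0.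
have r0 : 0 <= r by exact: sqrtr_ge0.
have [rz|rn0] := eqVneq r 0.
  have ez : e = 0 by move: r2; rewrite rz; nra.
  have bz : b = 0 by move: r2; rewrite rz; nra.
  have eA' : A = mk2 p 0 0 p.
    rewrite eA bz; congr mk2; move: ez; rewrite /p /e; lra.
  exists p, p, (mk2 1 0 0 0), (mk2 0 0 0 1); split.
  - by rewrite eA'; apply: mx2_eq'; rewrite !mxE /=; lra.
  - by apply: mx2_eq'; rewrite !mxE /=; lra.
  - by apply: mx2_eq'; rewrite !mul2E !mxE /=; lra.
  - by apply: mx2_eq'; rewrite !mul2E !mxE /=; lra.
  - by apply: mx2_eq'; rewrite !mul2E !mxE /=; lra.
  - by apply: mx2_eq'; rewrite !mul2E !mxE /=; lra.
  - by apply: mx2_eq'; rewrite !mxE /=.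
  - by apply: mx2_eq'; rewrite !mxE /=.
  - apply: idem_vec; first by apply: mx2_eq'; rewrite !mul2E !mxE /=; lra.
    by rewrite !mxE /=; lra.
  - apply: idem_vec; first by apply: mx2_eq'; rewrite !mul2E !mxE /=; lra.
    by rewrite !mxE /=; lra.
have rp : 0 < r by rewrite lt_neqAle eq_sym rn0.
set C := e / r; set S := b / r.
have CS : C ^+ 2 + S ^+ 2 = 1.
  have -> : C ^+ 2 + S ^+ 2 = (e ^+ 2 + b ^+ 2) / r ^+ 2.
    by rewrite /C /S; field.
  by rewrite -r2 divff // expf_neq0.
have eA' : A = mk2 (p + r * C) (r * S) (r * S) (p - r * C).
  rewrite eA /C /S; congr mk2; rewrite /p /e; field; exact: rn0.
exists (p + r), (p - r), (mk2 ((1 + C) / 2) (S / 2) (S / 2) ((1 - C) / 2)),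
  (mk2 ((1 - C) / 2) (- S / 2) (- S / 2) ((1 + C) / 2)); split.
- by rewrite eA'; apply: mx2_eq'; rewrite !mxE /=; lra.
- by apply: mx2_eq'; rewrite !mxE /=; lra.
- by apply: mx2_eq'; rewrite !mul2E !mxE /=; nra.
- by apply: mx2_eq'; rewrite !mul2E !mxE /=; nra.
- by apply: mx2_eq'; rewrite !mul2E !mxE /=; nra.
- by apply: mx2_eq'; rewrite !mul2E !mxE /=; nra.
- by apply: mx2_eq'; rewrite !mxE /=.
- by apply: mx2_eq'; rewrite !mxE /=.
- apply: idem_vec; first by apply: mx2_eq'; rewrite !mul2E !mxE /=; nra.
  by rewrite !mxE /=; lra.
- apply: idem_vec; first by apply: mx2_eq'; rewrite !mul2E !mxE /=; nra.
  by rewrite !mxE /=; lra.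
Qed.


Lemma mexp_bounds X lo hi : symmetric2 X ->
  (forall w, lo * nrm w <= qf X w <= hi * nrm w) ->
  forall w, expR lo * nrm w <= qf (mexp X) w <= expR hi * nrm w.
Proof.
move=> sX h w; have [l [m [P [Q s]]]] := spec_exists sX.
have [h1 h2 h3 h4] := spec_bounds s h.
have se := spec_mexp s.
apply/andP; split.
  by apply: (spec_ge _ se); rewrite ler_expR.
by apply: (spec_le _ se); rewrite ler_expR.
Qed.

Lemma mlog_cases S : mlog S = 0 \/ (symmetric2 (mlog S) /\ mexp (mlog S) = S).
Proof.
rewrite /mlog; case: xgetP => [x _ [h1 h2]|_]; [by right|by left].
Qed.

Lemma mlog_bounds S a b lo hi : lo <= 0 -> 0 <= hi ->
  expR lo <= a -> b <= expR hi ->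
  (forall w, a * nrm w <= qf S w <= b * nrm w) ->
  forall w, lo * nrm w <= qf (mlog S) w <= hi * nrm w.
Proof.
move=> lo0 hi0 ha hb h w.
have [->|[sB eB]] := mlog_cases S.
  by rewrite qf0; apply/andP; split; [apply: mulr_le0_ge0|apply: mulr_ge0];
    rewrite ?nrm_ge0.
have [l [m [P [Q s]]]] := spec_exists sB.
have se := spec_mexp s; rewrite eB in se.
have [h1 h2 h3 h4] := spec_bounds se h.
apply/andP; split.
  apply: (spec_ge _ s); rewrite -ler_expR; [exact: le_trans ha h1|exact: le_trans ha h3].
apply: (spec_le _ s); rewrite -ler_expR; [exact: le_trans h2 hb|exact: le_trans h4 hb].
Qed.


Local Open Scope classical_set_scope.

Lemma cont_entry (i j : 'I_2) : continuous (fun M : 'M[R]_2 => M i j).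
Proof.
move=> u A /nbhs_ballP[e /= e0 eA].
apply/nbhs_ballP; exists e => //= v [_ uv]; apply: eA; exact: uv.
Qed.

Lemma qf_cvg {T} (F : set_system T) {FF : ProperFilter F}
    (f : T -> 'M[R]_2) L w :
  f @ F --> L -> (fun t => qf (f t) w) @ F --> qf L w.
Proof.
move=> fL.
have ent i j : (fun t => f t i j) @ F --> L i j.
  exact: (continuous_cvg _ (@cont_entry i j L) fL).
rewrite qfE.
have -> : (fun t => qf (f t) w) = (fun t => w 0 0 * (f t 0 0 * w 0 0 + f t 0 1 * w 1 0)
  + w 1 0 * (f t 1 0 * w 0 0 + f t 1 1 * w 1 0)).
  by apply/funext => t; rewrite qfE.
by apply: cvgD; apply: cvgMr; apply: cvgD; apply: cvgMl; apply: ent.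
Qed.


Lemma lim_mx0 {T} (F : set_system T) (f : T -> 'M[R]_2) :
  ~ (exists L : 'M[R]_2, f @ F --> L) -> lim (f @ F) = 0.
Proof.
move=> nc; rewrite /lim /lim_in /get /xget.
case: pselect => [ex|_]; first by exfalso; case: ex => L /asboolP fL; apply: nc; exists L.
by apply/matrixP => i j; rewrite !mxE.
Qed.

Lemma le_eps (x hi N : R) : 0 <= N ->
  (forall e, 0 < e -> x <= (hi + e) * N) -> x <= hi * N.
Proof.
move=> N0 h; rewrite leNgt; apply/negP => hlt.
have [Nz|Np] := eqVneq N 0.
  by move: (h 1 ltr01) hlt; rewrite Nz !mulr0; lra.
have Npos : 0 < N by rewrite lt_neqAle eq_sym Np.
have ep : 0 < (x - hi * N) / (2 * N) by apply: divr_gt0; nra.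
have := h _ ep.
have -> : (hi + (x - hi * N) / (2 * N)) * N = hi * N + (x - hi * N) / 2.
  by field; rewrite Np.
lra.
Qed.

Lemma lim_bound {T} (F : set_system T) {FF : ProperFilter F}
    (f : T -> 'M[R]_2) lo hi : lo <= 0 -> 0 <= hi ->
  (forall e, 0 < e -> \forall t \near F,
     forall w, lo * nrm w <= qf (f t) w <= (hi + e) * nrm w) ->
  forall w, lo * nrm w <= qf (lim (f @ F)) w <= hi * nrm w.
Proof.
move=> lo0 hi0 H w.
have [[L fL]|nc] := pselect (exists L : 'M[R]_2, f @ F --> L); last first.
  rewrite lim_mx0 // qf0; apply/andP; split;
    [apply: mulr_le0_ge0|apply: mulr_ge0]; rewrite ?nrm_ge0 //.
rewrite (@cvg_lim _ (@norm_hausdorff R 'M[R]_2) _ _ _ _ _ fL).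
have qc : (fun t => qf (f t) w) @ F --> qf L w by apply: qf_cvg.
apply/andP; split.
  apply: (closed_cvg _ (@closed_ge R (lo * nrm w)) _ _ qc).
  by apply: filterS (H 1 ltr01) => t /(_ w) /andP[].
apply: le_eps; first exact: nrm_ge0.
move=> e e0.
apply: (closed_cvg _ (@closed_le R ((hi + e) * nrm w)) _ _ qc).
by apply: filterS (H e e0) => t /(_ w) /andP[].
Qed.


Lemma sym_scale a Y : symmetric2 Y -> symmetric2 (a *: Y).
Proof. by rewrite /symmetric2 => sY; rewrite linearZ /= sY. Qed.

Lemma mlog0 : mlog 0 = 0 :> 'M[R]_2.
Proof.
have [//|[sB eB]] := mlog_cases 0.
have [l [m [P [Q s]]]] := spec_exists sB.
have se := spec_mexp s; rewrite eB in se.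
case: (spec_eigl se) => w wn0; rewrite mul0mx => /esym/eqP.
rewrite scaler_eq0 (negPf wn0) orbF => /eqP h.
by have := expR_gt0 l; rewrite h ltxx.
Qed.

Lemma SupLE_bound n (Y : 'I_n -> 'M[R]_2) c : 0 <= c ->
  (forall i, symmetric2 (Y i)) ->
  (forall i w, - c * nrm w <= qf (Y i) w <= c * nrm w) ->
  forall w, - c * nrm w <= qf (SupLE Y) w <= c * nrm w.
Proof.
move=> c0 sY hY; rewrite /SupLE; apply: lim_bound; [lra|done|].
move=> e e0.
apply: filterS (filterI (nbhs_infty_ge 1) (nbhs_infty_ger (n%:R / e))).
move=> m [m1 hm] w.
set mr : R := m%:R.
have mrp : 0 < mr by rewrite /mr ltr0n.
set S := \sum_(i < n) mexp (mr *: Y i).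
suff hB : forall w, - (mr * c) * nrm w <= qf (mlog S) w <= (mr * (c + e)) * nrm w.
  have /andP[h1 h2] := hB w; rewrite qfZ.
  have mr0 : mr != 0 by rewrite gt_eqF.
  have mip : 0 <= mr^-1 by rewrite invr_ge0 ltW.
  have -> : - c * nrm w = mr^-1 * (- (mr * c) * nrm w) by field.
  have -> : (c + e) * nrm w = mr^-1 * (mr * (c + e) * nrm w) by field.
  by apply/andP; split; apply: ler_wpM2l.
case: n Y sY hY @S hm => [|k] Y sY hY S hm.
  move=> v; rewrite /S big_ord0 mlog0 qf0.
  have N0 := nrm_ge0 v; have mc0 : 0 <= mr * c by nra.
  apply/andP; split; first by rewrite mulNr oppr_le0; apply: mulr_ge0.
  by apply: mulr_ge0 => //; apply: mulr_ge0; [exact: ltW|lra].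
have hterm : forall i v, expR (- (mr * c)) * nrm v <= qf (mexp (mr *: Y i)) v
                              <= expR (mr * c) * nrm v.
  move=> i v; apply: mexp_bounds; first exact: sym_scale.
  move=> u; rewrite qfZ; have /andP[h1 h2] := hY i u; have N0 := nrm_ge0 u.
  apply/andP; split; nra.
apply: (@mlog_bounds S (expR (- (mr * c))) (k.+1%:R * expR (mr * c))).
- nra.
- have := ltW e0; nra.
- done.
- rewrite mulrDr expRD [X in _ <= X]mulrC ler_pM2r ?expR_gt0 //.
  apply: le_trans (expR_ge1Dx _).
  move: hm; rewrite ler_pdivrMr // -/mr; lra.
- move=> v; rewrite /S qf_sum; apply/andP; split.
    rewrite (bigD1 ord0) //= -[X in X <= _]addr0; apply: lerD.
      by have /andP[] := hterm ord0 v.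
    apply: sumr_ge0 => i _; have /andP[h1 _] := hterm i v.
    apply: le_trans h1; apply: mulr_ge0; [exact: ltW (expR_gt0 _)|exact: nrm_ge0].
  apply: (@le_trans _ _ (\sum_(i < k.+1) expR (mr * c) * nrm v)).
    by apply: ler_sum => i _; have /andP[] := hterm i v.
  rewrite sumr_const card_ord -mulr_natl le_eqVlt; apply/orP; left; apply/eqP; ring.
Qed.


Lemma eig_transfer A B l lo hi : symmetric2 A -> symmetric2 B ->
  (forall w, lo * nrm w <= qf B w <= hi * nrm w) ->
  (forall a, eigenvalue A a = eigenvalue B a) ->
  (exists2 w : 'cV[R]_2, w != 0 & A *m w = l *: w) -> lo <= l <= hi.
Proof.
move=> sA sB hB eAB [w wn0 Aw].
have : eigenvalue A l.
  apply/eigenvalueP; exists w^T; last by rewrite trmx_eq0.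
  by rewrite -{1}sA -trmx_mul Aw linearZ.
rewrite eAB => /eigenvalueP [v vB vn0].
have Bu : B *m v^T = l *: v^T by rewrite -{1}sB -trmx_mul vB linearZ.
have un0 : v^T != 0 by rewrite trmx_eq0.
have /andP[h1 h2] := hB v^T.
by rewrite (eig_ge un0 Bu h1) (eig_le un0 Bu h2).
Qed.

End Aux.

Local Open Scope classical_set_scope.

Lemma fam_bound (R : realType) n (X : 'I_n -> 'M[R]_2) c d : 0 <= c -> 0 < d ->
  (forall i, symmetric2 (X i)) ->
  (forall i w, - c * nrm w <= qf (X i) w <= c * nrm w) ->
  forall w, - c * nrm w <=
    qf (SupLE (xget (fun _ => X) (admissible_families X) d)) w <= c * nrm w.
Proof.
move=> c0 dp sX hX.
have [[Z adm]|nadm] := pselect (exists Z, admissible_families X Z).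
  have := xgetPex (fun _ => X) (ex_intro _ Z adm).
  set Fam := xget _ _ => -[[_ eig] hs].
  have [sF _] := hs d dp.
  apply: SupLE_bound => // i w.
  have [l [m [P [Q s]]]] := spec_exists (sF i).
  have hl := eig_transfer (sF i) (sX i) (hX i) (eig d dp i) (spec_eigl s).
  have hm := eig_transfer (sF i) (sX i) (hX i) (eig d dp i) (spec_eigm s).
  case/andP: hl => hl1 hl2; case/andP: hm => hm1 hm2.
  by apply/andP; split; [apply: (spec_ge _ s)|apply: (spec_le _ s)].
rewrite xgetPN; last by move=> Z hZ; apply: nadm; exists Z.
exact: SupLE_bound.
Qed.

Local Close Scope classical_set_scope.
Unset Implicit Arguments.

Theorem corollary3 (R : realType) (n : nat) (X : 'I_n -> 'M[R]_2) :
  (forall i, symmetric2 (X i)) ->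
  (forall i, loewner_le (- ((Num.sqrt (2 : R))^-1 *: 1%:M)) (X i) /\
             loewner_le (X i) ((Num.sqrt (2 : R))^-1 *: 1%:M)) ->
  loewner_le (- ((Num.sqrt (2 : R))^-1 *: 1%:M)) (SupRLE X) /\
  loewner_le (SupRLE X) ((Num.sqrt (2 : R))^-1 *: 1%:M).
Proof.
set c := (Num.sqrt (2 : R))^-1 => sX hX0.
have c0 : 0 <= c by rewrite /c invr_ge0 sqrtr_ge0.
have qc w : qf (c *: 1%:M) w = c * nrm w by rewrite qfZ -nrm_qf.
have hX i w : - c * nrm w <= qf (X i) w <= c * nrm w.
  have [/loewnerP h1 /loewnerP h2] := hX0 i.
  have := h1 w; have := h2 w; rewrite qfN !qc => a b.
  by rewrite mulNr b a.
suff H : forall w, - c * nrm w <= qf (SupRLE X) w <= c * nrm w.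
  split; apply/loewnerP => w; have /andP[h1 h2] := H w.
    by rewrite qfN qc -mulNr.
  by rewrite qc.
rewrite /SupRLE; case: asboolP => _; first exact: SupLE_bound.
apply: lim_bound; [by rewrite oppr_le0|done|].
move=> e e0; apply: filterS (nbhs_right_gt 0) => d dp w.
have /andP[h1 h2] := fam_bound c0 dp sX hX w.
apply/andP; split => //; apply: le_trans h2 _.
by rewrite ler_wpM2r ?nrm_ge0 // lerDl ltW.
Qed.
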